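(* Let $C,\beta>0$ and $N,M\in\mathbb{N}$. Let $H$ be a Hilbert space of dimension $M$, and let $(x_j)_{j=1}^N$ and $(f_j)_{j=1}^N$ be sequences in $H$ satisfying $\|x_j\|=\|f_j\|$ for all $1\leq j\leq N$ and $$\Big\|\sum_{j=1}^N \varepsilon_j\langle x, f_j\rangle x_j\Big\|\leq C\|x\| \qquad\text{for all } x\in H \text{ and all scalars } \varepsilon_j \text{ with } |\varepsilon_j|=1.$$ If the frame operator of $(f_j)_{j=1}^N$ has eigenvalues $\lambda_1\geq\dots\geq\lambda_M$ satisfying $\lambda_1\leq \frac{\beta}{M}\sum_{j=1}^M\lambda_j$, then $(f_j)_{j=1}^N$ has Bessel bound $\frac{27}{4}K_1^{-4}\beta^2 C$. In particular, if $(f_j)_{j=1}^N$ is a frame with condition number $\beta$ then $(f_j)_{j=1}^N$ has Bessel bound $\frac{27}{4}K_1^{-4}\beta^2 C$, and if $(f_j)_{j=1}^N$ is a tight frame then $(f_j)_{j=1}^N$ has Bessel bound $\frac{27}{4}K_1^{-4}C$. Likewise, if the frame operator of $(x_j)_{j=1}^N$ has eigenvalues $\lambda_1\geq\dots\geq\lambda_M$ satisfying $\lambda_1\leq\frac{\beta}{M}\sum_{j=1}^M\lambda_j$, then $(x_j)_{j=1}^N$ has Bessel bound $\frac{27}{4}K_1^{-4}\beta^2 C$.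
   Context: A sequence $(y_j)_{j=1}^N$ in a Hilbert space $H$ has Bessel bound $B$ if $\sum_{j=1}^N|\langle x,y_j\rangle|^2\leq B\|x\|^2$ for all $x\in H$; it is a frame if additionally there is $A>0$ with $A\|x\|^2\leq\sum_j|\langle x,y_j\rangle|^2$ for all $x$; the condition number is the ratio $B/A$ of optimal bounds, and the frame is tight if the condition number is $1$. The frame operator of $(y_j)$ is $S(x)=\sum_{j}\langle x,y_j\rangle y_j$. $K_1>0$ denotes the constant in Khintchine's inequality: for all $N\in\mathbb{N}$ and all scalars $(a_j)_{j=1}^N$, $2^{-N}\sum_{\delta_j=\pm1}\big|\sum_{j=1}^N\delta_j a_j\big|\geq K_1\big(\sum_{j=1}^N|a_j|^2\big)^{1/2}$. *)

(* Defs.v *)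
(* Scalars: a numClosedFieldType K (e.g. algC, complex R).
   A boolean [rs] selects real scalars (entries in Num.real) or complex scalars (all of K). *)
From HB Require Import structures.
From mathcomp Require Import all_boot all_order all_algebra.
Set Implicit Arguments. Unset Strict Implicit. Unset Printing Implicit Defensive.
Import Order.TTheory GRing.Theory Num.Theory.
Local Open Scope ring_scope.

Section Defs.
Variable K : numClosedFieldType.

Definition is_scalar (rs : bool) (z : K) : bool := if rs then z \is Num.real else true.

(* the M-dimensional Hilbert space: row vectors with scalar entries *)
Definition inH (rs : bool) (M : nat) (v : 'rV[K]_M) : Prop := forall i, is_scalar rs (v 0 i).

Definition dotp (M : nat) (u v : 'rV[K]_M) : K := \sum_(i < M) u 0 i * (v 0 i)^*.
Definition hnorm (M : nat) (v : 'rV[K]_M) : K := sqrtC (dotp v v).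

(* frame operator S x = sum_j <x, y_j> y_j, and its matrix (x *m S = S x) *)
Definition frame_op (M N : nat) (y : 'I_N -> 'rV[K]_M) (x : 'rV[K]_M) : 'rV[K]_M :=
  \sum_(j < N) dotp x (y j) *: y j.
Definition frame_mx (M N : nat) (y : 'I_N -> 'rV[K]_M) : 'M[K]_M :=
  \matrix_(i, k) (frame_op y (delta_mx 0 i)) 0 k.

Definition eigenvalues_desc (M : nat) (S : 'M[K]_M) (lam : nat -> K) : Prop :=
  char_poly S = \prod_(i < M) ('X - (lam i)%:P) /\
  (forall i j, (i <= j < M)%N -> lam j <= lam i).

Definition bessel_bound (rs : bool) (M N : nat) (y : 'I_N -> 'rV[K]_M) (B : K) : Prop :=
  forall x, inH rs x -> \sum_(j < N) `|dotp x (y j)| ^+ 2 <= B * hnorm x ^+ 2.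

Definition lower_frame_bound (rs : bool) (M N : nat) (y : 'I_N -> 'rV[K]_M) (A : K) : Prop :=
  forall x, inH rs x -> A * hnorm x ^+ 2 <= \sum_(j < N) `|dotp x (y j)| ^+ 2.

Definition condition_number (rs : bool) (M N : nat) (y : 'I_N -> 'rV[K]_M) (kappa : K) : Prop :=
  exists A B : K, 0 < A /\ lower_frame_bound rs y A /\
     (forall A', lower_frame_bound rs y A' -> A' <= A) /\
     bessel_bound rs y B /\ (forall B', bessel_bound rs y B' -> B <= B') /\
     kappa = B / A.

Definition tight_frame (rs : bool) (M N : nat) (y : 'I_N -> 'rV[K]_M) : Prop :=
  condition_number rs y 1.

Definition khintchine_const (rs : bool) (K1 : K) : Prop :=
  forall (n : nat) (a : 'I_n -> K), (forall j, is_scalar rs (a j)) ->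
    K1 * sqrtC (\sum_(j < n) `|a j| ^+ 2) <=
    (2 ^+ n)^-1 * \sum_(d : {ffun 'I_n -> bool})
        `|\sum_(j < n) (if d j then 1 else -1) * a j|.

End Defs.

(* Main.v *)
Require Import Defs.
From HB Require Import structures.
From mathcomp Require Import all_boot all_order all_algebra ring.
Import Order.TTheory GRing.Theory Num.Theory.
Local Open Scope ring_scope.
Set Implicit Arguments. Unset Strict Implicit. Unset Printing Implicit Defensive.


Section S.
Variable K : numClosedFieldType.

Lemma dotpE M (u v : 'rV[K]_M) : dotp u v = dotmx u v.
Proof. by rewrite dotmxE /dotp !mxE; apply: eq_bigr => i _; rewrite !mxE. Qed.

Lemma dotp_ge0 M (u : 'rV[K]_M) : 0 <= dotp u u.
Proof. rewrite dotpE; exact: dnorm_ge0. Qed.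

Lemma CS M (u v : 'rV[K]_M) : `|dotp u v| <= hnorm u * hnorm v.
Proof. rewrite /hnorm !dotpE; exact: (CauchySchwarz_sqrt (@dotmx K M) u v).1. Qed.

Lemma hnorm_sq M (u : 'rV[K]_M) : hnorm u ^+ 2 = dotp u u.
Proof. by rewrite /hnorm sqrtCK. Qed.

Lemma hnorm_ge0 M (u : 'rV[K]_M) : 0 <= hnorm u.
Proof. by rewrite /hnorm sqrtC_ge0 dotp_ge0. Qed.

Lemma dotp_real M (u v : 'rV[K]_M) : inH true u -> inH true v -> dotp u v \is Num.real.
Proof.
move=> hu hv; rewrite /dotp rpred_sum // => i _.
have := hu i; have := hv i; rewrite /is_scalar => rv ru.
by rewrite rpredM // conj_Creal.
Qed.

Lemma dotp_suml M (I : finType) (a : I -> K) (y : I -> 'rV[K]_M) w :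
  dotp (\sum_j a j *: y j) w = \sum_j a j * dotp (y j) w.
Proof.
rewrite /dotp.
under eq_bigr => i _ do rewrite summxE mulr_suml.
rewrite exchange_big /=; apply: eq_bigr => j _; rewrite mulr_sumr.
by apply: eq_bigr => i _; rewrite mxE mulrA.
Qed.

Lemma step1 rs (C : K) N M (x f : 'I_N -> 'rV[K]_M) :
  (forall j, inH rs (x j)) -> (forall j, inH rs (f j)) ->
  (forall (v : 'rV[K]_M) (eps : 'I_N -> K), inH rs v ->
     (forall j, is_scalar rs (eps j) /\ `|eps j| = 1) ->
     hnorm (\sum_(j < N) (eps j * dotp v (f j)) *: x j) <= C * hnorm v) ->
  forall v w, inH rs v -> inH rs w ->
  \sum_j `|dotp v (f j)| * `|dotp (x j) w| <= C * hnorm v * hnorm w.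
Proof.
move=> hx hf hC v w hv hw.
pose z j := dotp v (f j) * dotp (x j) w.
pose eps j := if z j == 0 then 1 else (z j)^* / `|z j|.
have epsz j : eps j * z j = `|z j|.
  rewrite /eps; case: eqP => [->|/eqP nz]; first by rewrite mulr0 normr0.
  by rewrite mulrAC [_^* * _]mulrC -normCK expr2 mulfK // normr_eq0.
have heps j : is_scalar rs (eps j) /\ `|eps j| = 1.
  split; last first.
    rewrite /eps; case: eqP => [_|/eqP nz]; first by rewrite normr1.
    by rewrite normrM normfV norm_conjC normr_id mulfV // normr_eq0.
  rewrite /is_scalar; case: rs hx hf hv hw {hC} => // hx hf hv hw.
  have zr : z j \is Num.real by rewrite rpredM // dotp_real.
  rewrite /eps; case: eqP => _; first exact: rpred1.
  by rewrite conj_Creal // rpredM // ?rpredV normr_real.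
have := hC v eps hv heps.
set T := \sum_j _ => hT.
have e1 : dotp T w = \sum_j `|z j|.
  rewrite dotp_suml; apply: eq_bigr => j _; by rewrite -mulrA epsz.
have : `|dotp T w| <= C * hnorm v * hnorm w.
  apply: le_trans (CS T w) _; apply: ler_wpM2r => //; exact: hnorm_ge0.
rewrite e1 ger0_norm ?sumr_ge0 //.
by under eq_bigr => j _ do rewrite /z normrM.
Qed.

Definition sg (b : bool) : K := if b then 1 else -1.
Definition uvec M (d : {ffun 'I_M -> bool}) : 'rV[K]_M := \row_i sg (d i).

Lemma sg_conj b : (sg b)^* = sg b.
Proof. by case: b; rewrite /sg ?rmorphN rmorph1. Qed.

Lemma sg_real b : sg b \is Num.real.
Proof. by case: b; rewrite /sg ?rpredN rpred1. Qed.

Lemma uvec_inH rs M d : inH rs (@uvec M d).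
Proof. by move=> i; rewrite /is_scalar mxE; case: rs => //; exact: sg_real. Qed.

Lemma hnorm_uvec M d : hnorm (@uvec M d) * hnorm (uvec d) = M%:R.
Proof.
rewrite -expr2 hnorm_sq /dotp.
rewrite (eq_bigr (fun _ => 1)) ?sumr_const ?card_ord //.
by move=> i _; rewrite mxE sg_conj /sg; case: (d i); rewrite ?mulr1 ?mulrNN ?mulr1.
Qed.

Lemma khin_l rs K1 M (a : 'rV[K]_M) : khintchine_const rs K1 -> inH rs a ->
  2 ^+ M * K1 * hnorm a <= \sum_(d : {ffun 'I_M -> bool}) `|dotp (uvec d) a|.
Proof.
move=> hK ha.
have := hK M (fun i => (a 0 i)^*).
have hs : forall j, is_scalar rs ((a 0 j)^*).
  by move=> j; have := ha j; rewrite /is_scalar; case: (rs) => // r; rewrite conj_Creal.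
move=> /(_ hs).
have -> : \sum_(j < M) `|(a 0 j)^*| ^+ 2 = dotp a a.
  by apply: eq_bigr => j _; rewrite norm_conjC normCK.
rewrite -/(hnorm a) => h.
have h2 : (0 : K) < 2 ^+ M by rewrite exprn_gt0.
rewrite -mulrA; have := ler_wpM2l (ltW h2) h; rewrite mulVKf ?gt_eqF //.
move/le_trans; apply; rewrite le_eqVlt; apply/orP; left; apply/eqP; apply: eq_bigr => d _; rewrite /dotp; congr `|_|; apply: eq_bigr => i _; rewrite mxE /sg; case: (d i) => //.
Qed.

Lemma khin_r rs K1 M (a : 'rV[K]_M) : khintchine_const rs K1 -> inH rs a ->
  2 ^+ M * K1 * hnorm a <= \sum_(d : {ffun 'I_M -> bool}) `|dotp a (uvec d)|.
Proof.
move=> hK ha.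
have := hK M (fun i => a 0 i) ha.
have -> : \sum_(j < M) `|a 0 j| ^+ 2 = dotp a a.
  by apply: eq_bigr => j _; rewrite normCK.
rewrite -/(hnorm a) => h.
have h2 : (0 : K) < 2 ^+ M by rewrite exprn_gt0.
rewrite -mulrA; have := ler_wpM2l (ltW h2) h; rewrite mulVKf ?gt_eqF //.
move/le_trans; apply; rewrite le_eqVlt; apply/orP; left; apply/eqP.
by apply: eq_bigr => d _; rewrite /dotp; congr `|_|; apply: eq_bigr => i _; rewrite mxE sg_conj mulrC /sg; case: (d i).
Qed.

Lemma hnorm_uvec1 M d : hnorm (@uvec M d) = sqrtC M%:R.
Proof.
rewrite /hnorm /dotp; congr sqrtC.
rewrite (eq_bigr (fun _ => 1)) ?sumr_const ?card_ord //.
by move=> i _; rewrite mxE sg_conj /sg; case: (d i); rewrite ?mulr1 ?mulrNN ?mulr1.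
Qed.

Lemma trace_bound rs (K1 C : K) N M (x f : 'I_N -> 'rV[K]_M) :
  0 < K1 -> khintchine_const rs K1 ->
  (forall j, inH rs (x j)) -> (forall j, inH rs (f j)) ->
  (forall j, hnorm (x j) = hnorm (f j)) ->
  (forall (v : 'rV[K]_M) (eps : 'I_N -> K), inH rs v ->
     (forall j, is_scalar rs (eps j) /\ `|eps j| = 1) ->
     hnorm (\sum_(j < N) (eps j * dotp v (f j)) *: x j) <= C * hnorm v) ->
  K1 ^+ 2 * \sum_j dotp (f j) (f j) <= C * M%:R.
Proof.
move=> K1p hK hx hf hxf hC.
have s1 := step1 hx hf hC.
pose c : K := #|{ffun 'I_M -> bool}|%:R.
have cE : c = 2 ^+ M by rewrite /c card_ffun card_bool card_ord natrX.
have cp : 0 < c by rewrite cE exprn_gt0.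
have up : \sum_(d : {ffun 'I_M -> bool}) \sum_(d' : {ffun 'I_M -> bool})
     \sum_j `|dotp (uvec d) (f j)| * `|dotp (x j) (uvec d')| <= c * c * (C * M%:R).
  have -> : c * c * (C * M%:R) = \sum_(d : {ffun 'I_M -> bool}) \sum_(d' : {ffun 'I_M -> bool}) (C * M%:R).
    by rewrite !sumr_const -mulrnA /c -natrM [LHS]mulrC !mulr_natr.
  apply: ler_sum => d _; apply: ler_sum => d' _.
  apply: le_trans (s1 _ _ (uvec_inH _ _) (uvec_inH _ _)) _.
  by rewrite !hnorm_uvec1 -mulrA -expr2 sqrtCK.
have lo : c * c * (K1 ^+ 2 * \sum_j dotp (f j) (f j)) <= \sum_(d : {ffun 'I_M -> bool}) \sum_(d' : {ffun 'I_M -> bool})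
     \sum_j `|dotp (uvec d) (f j)| * `|dotp (x j) (uvec d')|.
  have -> : \sum_(d : {ffun 'I_M -> bool}) \sum_(d' : {ffun 'I_M -> bool})
     \sum_j `|dotp (uvec d) (f j)| * `|dotp (x j) (uvec d')| =
     \sum_j (\sum_(d : {ffun 'I_M -> bool}) `|dotp (uvec d) (f j)|) * (\sum_(d' : {ffun 'I_M -> bool}) `|dotp (x j) (uvec d')|).
    symmetry; under eq_bigr => j _ do rewrite mulr_suml.
    rewrite exchange_big /=; apply: eq_bigr => d _.
    under eq_bigr => j _ do rewrite mulr_sumr.
    by rewrite exchange_big.
  rewrite mulrA mulr_sumr; apply: ler_sum => j _.
  have e : c * c * K1 ^+ 2 * dotp (f j) (f j) = (2 ^+ M * K1 * hnorm (f j)) * (2 ^+ M * K1 * hnorm (x j)).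
    by rewrite hxf -cE -hnorm_sq; ring.
  rewrite e; apply: ler_pM.
  - by rewrite !mulr_ge0 ?hnorm_ge0 ?ltW // exprn_gt0.
  - by rewrite !mulr_ge0 ?hnorm_ge0 ?ltW // exprn_gt0.
  - exact: khin_l hK (hf j).
  - exact: khin_r hK (hx j).
have := le_trans lo up.
by rewrite ler_pM2l // mulr_gt0.
Qed.
End S.

Section Sp.
Local Open Scope sesquilinear_scope.
Variable K : numClosedFieldType.

Lemma dotp_mx M (u v : 'rV[K]_M) : dotp u v = (u *m v ^t*) 0 0.
Proof. by rewrite dotpE dotmxE. Qed.

Lemma frame_mxE N M (y : 'I_N -> 'rV[K]_M) i k :
  frame_mx y i k = \sum_j (y j 0 i)^* * y j 0 k.
Proof.
rewrite /frame_mx /frame_op mxE summxE; apply: eq_bigr => j _.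
rewrite mxE; congr (_ * _).
rewrite /dotp (bigD1 i) //= big1 => [|l nl]; first by rewrite !mxE !eqxx mul1r addr0.
by rewrite !mxE (negbTE nl) andbF mul0r.
Qed.

Lemma frame_tr N M (y : 'I_N -> 'rV[K]_M) :
  \tr (frame_mx y) = \sum_j dotp (y j) (y j).
Proof.
rewrite /mxtrace; under eq_bigr => i _ do rewrite frame_mxE.
rewrite exchange_big; apply: eq_bigr => j _; apply: eq_bigr => i _; exact: mulrC.
Qed.

Lemma frame_herm N M (y : 'I_N -> 'rV[K]_M) : (frame_mx y) ^t* = frame_mx y.
Proof.
apply/matrixP => i k; rewrite [RHS]frame_mxE mxE [_^T _ _]mxE frame_mxE rmorph_sum; apply: eq_bigr => j _.
by rewrite rmorphM /= conjCK mulrC.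
Qed.

Lemma frame_rayleigh N M (y : 'I_N -> 'rV[K]_M) v :
  \sum_j `|dotp v (y j)| ^+ 2 = dotp (v *m frame_mx y) v.
Proof.
have e : v *m frame_mx y = \sum_j dotp v (y j) *: y j.
  apply/rowP => k; rewrite !mxE summxE.
  under eq_bigr => i _ do rewrite frame_mxE mulr_sumr.
  rewrite exchange_big; apply: eq_bigr => j _.
  rewrite !mxE /dotp mulr_suml; apply: eq_bigr => i _; by rewrite mulrA.
rewrite e dotp_suml; apply: eq_bigr => j _.
rewrite normCK; congr (_ * _).
rewrite /dotp rmorph_sum; apply: eq_bigr => i _; by rewrite rmorphM /= conjCK mulrC.
Qed.

Lemma sum_lam M (S : 'M[K]_M) lam : (0 < M)%N -> eigenvalues_desc S lam ->
  \sum_(i < M) lam i = \tr S.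
Proof.
move=> M0 [hc _].
have := char_poly_trace S M0; rewrite hc.
rewrite -(big_mkord xpredT (fun i => 'X - (lam i)%:P)).
rewrite /index_iota subn0 -(big_map lam xpredT (fun p => 'X - p%:P)).
have h := @coefPn_prod_XsubC _ [seq lam i | i <- iota 0 M].
rewrite size_map size_iota -lt0n in h; rewrite (h M0).
rewrite big_map -(big_mkord xpredT lam) /index_iota subn0 => /eqP.
by rewrite eqr_opp => /eqP.
Qed.

Lemma eig_le M (S : 'M[K]_M) lam a : eigenvalues_desc S lam -> eigenvalue S a -> a <= lam 0%N.
Proof.
move=> [hc ho]; rewrite eigenvalue_root_char hc.
rewrite -(big_mkord xpredT (fun i => 'X - (lam i)%:P)).
rewrite /index_iota subn0 -(big_map lam xpredT (fun p => 'X - p%:P)).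
rewrite root_prod_XsubC => /mapP [k]; rewrite mem_iota add0n => /andP[_ kM] ->.
by apply: ho; rewrite kM.
Qed.

Lemma spec_bound N M (y : 'I_N -> 'rV[K]_M) lam v :
  eigenvalues_desc (frame_mx y) lam ->
  \sum_j `|dotp v (y j)| ^+ 2 <= lam 0%N * dotp v v.
Proof.
move=> hl.
set S := frame_mx y.
have nS : S \is normalmx by apply/normalmxP; rewrite /S frame_herm.
have /orthomx_spectralP SE := nS.
set P := spectralmx S in SE *; set d := spectral_diag S in SE *.
have Pu : P \is unitarymx := spectral_unitarymx S.
have iP : invmx P = P^t* := invmx_unitary Pu.
have PP : P^t* *m P = 1%:M by rewrite -iP mulVmx // spectral_unit.
have PP' : P *m P^t* = 1%:M by apply/unitarymxP.
have deig i : d 0 i <= lam 0%N.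
  apply: (eig_le hl); apply/eigenvalueP; exists (row i P).
    rewrite -row_mul -/S SE iP !mulmxA PP' mul1mx mul_diag_mx.
    by apply/rowP => k; rewrite !mxE.
  apply/eqP => h0.
  have : row i (P *m P^t*) = row i 1%:M by rewrite PP'.
  rewrite row_mul h0 mul0mx => /rowP /(_ i); rewrite !mxE eqxx /= => /eqP.
  by rewrite eq_sym oner_eq0.
rewrite frame_rayleigh !dotp_mx.
set z := v *m P^t*.
have zt : z ^t* = P *m v ^t* by rewrite /z trmx_mul map_mxM trmxCK.
have e1 : v *m S *m v ^t* = z *m diag_mx d *m z ^t*.
  by rewrite zt SE iP /z !mulmxA.
have e2 : v *m v ^t* = z *m z ^t*.
  by rewrite zt /z -mulmxA (mulmxA (P^t*) P) PP mul1mx.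
rewrite e1 e2 mul_mx_diag !mxE mulr_sumr; apply: ler_sum => i _.
rewrite !mxE; move: (\sum_j v 0 j * (P ^t*) j i) => a.
have -> : a * d 0 i * a^* = d 0 i * (a * a^*) by ring.
apply: ler_wpM2r; first by rewrite mul_conjC_ge0.
exact: deig.
Qed.
End Sp.
Section D.
Variable K : numClosedFieldType.

Lemma K1_le1 rs (K1 : K) : 0 < K1 -> khintchine_const rs K1 -> K1 <= 1.
Proof.
move=> K1p hK.
have := hK 1%N (fun _ => 1).
have hs : forall j : 'I_1, is_scalar rs (1 : K) by move=> j; rewrite /is_scalar; case: (rs) => //; exact: rpred1.
move=> /(_ hs); rewrite big_ord1 normr1 expr1n sqrtC1 mulr1.
rewrite (eq_bigr (fun _ => 1)); last by move=> d _; rewrite big_ord1 mulr1; case: (d _); rewrite ?normrN normr1.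
rewrite sumr_const card_ffun card_bool card_ord expn1 expr1.
by rewrite mulVf // pnatr_eq0.
Qed.

Lemma num1 (K1 C beta : K) : 0 < K1 -> K1 <= 1 -> 0 < C -> 1 <= beta ->
  beta * (C / K1 ^+ 2) <= 27 / 4 * K1 ^- 4 * beta ^+ 2 * C.
Proof.
move=> K1p K1le Cp b1.
have bp : 0 < beta by apply: lt_le_trans b1; exact: ltr01.
have k2p : 0 < K1 ^+ 2 by rewrite exprn_gt0.
have -> : 27 / 4 * K1 ^- 4 * beta ^+ 2 * C = beta * (C / K1 ^+ 2) * (27 / 4 * beta / K1 ^+ 2).
  by field; rewrite gt_eqF.
rewrite -[X in X <= _]mulr1; apply: ler_wpM2l.
  by rewrite mulr_ge0 ?ltW // divr_gt0.
rewrite ler_pdivlMr // mul1r.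
apply: le_trans (exprn_ile1 _ (ltW K1p) K1le) _.
apply: le_trans b1 _.
rewrite -[X in X <= _]mul1r; apply: ler_wpM2r; first exact: ltW.
by rewrite ler_pdivlMr ?ltr0n // mul1r ler_nat.
Qed.


Lemma L0 rs N (y : 'I_N -> 'rV[K]_0) B : bessel_bound rs y B.
Proof.
move=> v _; rewrite /hnorm /dotp big_ord0 sqrtC0 expr0n /= mulr0.
by rewrite big1 // => j _; rewrite big_ord0 normr0 expr0n.
Qed.

Lemma dotp_delta M (i : 'I_M) (u : 'rV[K]_M) : dotp (delta_mx 0 i) u = (u 0 i)^*.
Proof.
rewrite /dotp (bigD1 i) //= big1 => [|l nl]; first by rewrite !mxE !eqxx mul1r addr0.
by rewrite !mxE (negbTE nl) andbF mul0r.
Qed.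

Lemma num2 (K1 C beta lam0 t : K) M : (0 < M)%N -> 0 < K1 -> K1 <= 1 -> 0 < C -> 0 < beta ->
  K1 ^+ 2 * t <= C * M%:R -> t <= M%:R * lam0 -> lam0 <= beta / M%:R * t ->
  lam0 <= 27 / 4 * K1 ^- 4 * beta ^+ 2 * C.
Proof.
move=> M0 K1p K1le Cp bp tb tl ll.
have Mp : (0 : K) < M%:R by rewrite ltr0n.
have k2p : 0 < K1 ^+ 2 by rewrite exprn_gt0.
have bndp : 0 < 27 / 4 * K1 ^- 4 * beta ^+ 2 * C.
  by rewrite !mulr_gt0 ?exprn_gt0 ?invr_gt0 ?exprn_gt0 ?divr_gt0 ?ltr0n.
have [b1|b1] := real_leP (@real1 _) (gtr0_real bp).
  apply: le_trans (num1 K1p K1le Cp b1).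
  apply: le_trans ll _.
  rewrite mulrAC -mulrA; apply: ler_wpM2l; first exact: ltW.
  by rewrite ler_pdivrMr // mulrAC ler_pdivlMr // mulrC.
have : lam0 <= beta * lam0.
  apply: le_trans ll _.
  have -> : beta * lam0 = beta / M%:R * (M%:R * lam0) by field; rewrite gt_eqF.
  by apply: ler_wpM2l => //; rewrite divr_ge0 ?ltW.
rewrite -subr_ge0 => h0.
have h1 : (1 - beta) * lam0 <= 0.
  have -> : (1 - beta) * lam0 = - (beta * lam0 - lam0) by ring.
  by rewrite oppr_le0.
rewrite pmulr_rle0 in h1; last by rewrite subr_gt0.
exact: le_trans h1 (ltW bndp).
Qed.

End D.
Section E.
Variable K : numClosedFieldType.

Lemma L1 rs (K1 C beta : K) N M (y : 'I_N -> 'rV[K]_M) : (0 < M)%N ->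
  0 < K1 -> K1 <= 1 -> 0 < C -> 0 < beta ->
  K1 ^+ 2 * \sum_j dotp (y j) (y j) <= C * M%:R ->
  forall lam, eigenvalues_desc (frame_mx y) lam ->
         lam 0%N <= beta / M%:R * \sum_(j < M) lam j ->
         bessel_bound rs y (27 / 4 * K1 ^- 4 * beta ^+ 2 * C).
Proof.
move=> M0 K1p K1le Cp bp tb lam hl hle v _.
apply: le_trans (spec_bound v hl) _.
rewrite hnorm_sq; apply: ler_wpM2r; first exact: dotp_ge0.
have ht : \sum_(j < M) lam j = \sum_j dotp (y j) (y j) by rewrite (sum_lam M0 hl) frame_tr.
apply: (num2 M0 K1p K1le Cp bp tb); last by rewrite -ht.
rewrite -ht mulr_natl -[in X in _ <= X](card_ord M) -sumr_const.
apply: ler_sum => i _; case: hl => _ ho; apply: ho; by rewrite ltn_ord.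
Qed.


Lemma delta_inH rs M (i : 'I_M) : inH rs (delta_mx 0 i : 'rV[K]_M).
Proof. by move=> k; rewrite /is_scalar; case: (rs) => //; rewrite mxE realn. Qed.

Lemma delta_norm M (i : 'I_M) : hnorm (delta_mx 0 i : 'rV[K]_M) ^+ 2 = 1.
Proof. by rewrite hnorm_sq dotp_delta mxE !eqxx /= rmorph1. Qed.

Lemma L2 rs (K1 C kappa : K) N M (y : 'I_N -> 'rV[K]_M) : (0 < M)%N ->
  0 < K1 -> K1 <= 1 -> 0 < C ->
  K1 ^+ 2 * \sum_j dotp (y j) (y j) <= C * M%:R ->
  condition_number rs y kappa ->
  bessel_bound rs y (27 / 4 * K1 ^- 4 * kappa ^+ 2 * C).
Proof.
move=> M0 K1p K1le Cp tb [A [B [Ap [hA [_ [hB [_ ->]]]]]]].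
have Mp : (0 : K) < M%:R by rewrite ltr0n.
have k2p : 0 < K1 ^+ 2 by rewrite exprn_gt0.
have AM : A * M%:R <= \sum_j dotp (y j) (y j).
  have -> : \sum_j dotp (y j) (y j) = \sum_(i < M) \sum_j `|dotp (delta_mx 0 i) (y j)| ^+ 2.
    rewrite exchange_big; apply: eq_bigr => j _; apply: eq_bigr => i _.
    by rewrite dotp_delta norm_conjC normCK.
  rewrite mulr_natr -[in X in X <= _](card_ord M) -sumr_const.
  apply: ler_sum => i _; have := hA _ (delta_inH rs i); by rewrite delta_norm mulr1.
pose i0 : 'I_M := Ordinal M0.
have AB : A <= B.
  have := hA _ (delta_inH rs i0); have := hB _ (delta_inH rs i0).
  rewrite delta_norm !mulr1 => h1 h2; exact: le_trans h2 h1.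
have b1 : 1 <= B / A by rewrite ler_pdivlMr // mul1r.
have AC : A <= C / K1 ^+ 2.
  rewrite ler_pdivlMr // mulrC; rewrite -(ler_pM2r Mp).
  apply: le_trans _ tb; rewrite -mulrA; apply: ler_wpM2l; [exact: ltW | exact: AM].
have BC : B <= B / A * (C / K1 ^+ 2).
  rewrite -[X in X <= _](divfK (lt0r_neq0 Ap) B); apply: ler_wpM2l => //.
  by rewrite divr_ge0 // ltW // (lt_le_trans Ap AB).
move=> v hv; apply: le_trans (hB v hv) _; apply: ler_wpM2r.
  by rewrite exprn_ge0 // hnorm_ge0.
exact: le_trans BC (num1 K1p K1le Cp b1).
Qed.

End E.

Unset Implicit Arguments.
Set Strict Implicit.

Theorem theorem4p6 (K : numClosedFieldType) (rs : bool) (K1 C beta : K) (N M : nat)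
  (x f : 'I_N -> 'rV[K]_M) :
  0 < K1 -> khintchine_const rs K1 ->
  0 < C -> 0 < beta ->
  (forall j, inH rs (x j)) -> (forall j, inH rs (f j)) ->
  (forall j, hnorm (x j) = hnorm (f j)) ->
  (forall (v : 'rV[K]_M) (eps : 'I_N -> K), inH rs v ->
     (forall j, is_scalar rs (eps j) /\ `|eps j| = 1) ->
     hnorm (\sum_(j < N) (eps j * dotp v (f j)) *: x j) <= C * hnorm v) ->
  let bnd := 27 / 4 * K1 ^- 4 * beta ^+ 2 * C in
  [/\ (forall lam, eigenvalues_desc (frame_mx f) lam ->
         lam 0%N <= beta / M%:R * \sum_(j < M) lam j -> bessel_bound rs f bnd),
      (condition_number rs f beta -> bessel_bound rs f bnd),
      (tight_frame rs f -> bessel_bound rs f (27 / 4 * K1 ^- 4 * C))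
    & (forall lam, eigenvalues_desc (frame_mx x) lam ->
         lam 0%N <= beta / M%:R * \sum_(j < M) lam j -> bessel_bound rs x bnd)].
Proof.
move=> K1p hK Cp bp hx hf hxf hC bnd.
have K1le := K1_le1 K1p hK.
have tb := trace_bound K1p hK hx hf hxf hC.
have [M0|M0] := posnP M.
  subst M; split; by intros; apply: L0.
have tb' : K1 ^+ 2 * \sum_j dotp (x j) (x j) <= C * M%:R.
  suff -> : \sum_j dotp (x j) (x j) = \sum_j dotp (f j) (f j) by [].
  by apply: eq_bigr => j _; rewrite -!hnorm_sq hxf.
split.
- move=> lam; exact: L1 M0 K1p K1le Cp bp tb lam.
- exact: L2 M0 K1p K1le Cp tb.
- move=> /(L2 M0 K1p K1le Cp tb); by rewrite expr1n mulr1.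
- move=> lam; exact: L1 M0 K1p K1le Cp bp tb' lam.
Qed.
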